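(* Let $n\ge3$ and let $A$ be a set of $m$ vertices of $C_n$ with $2\le m\le n$. (1) If $n$ is even or $m$ is odd, then $A$ is a maximizer of $W$ on $C_n$ if and only if $A$ is balanced in $C_n$. (2) If $n$ is odd and $m$ is even, then $A$ is a maximizer of $W$ on $C_n$ if and only if $A$ is weakly balanced in $C_n$; moreover, in this case no maximizer of $W$ on $C_n$ of cardinality $m$ is balanced. (3) In all cases, $A$ is a maximizer of $W$ on $C_n$ if and only if $A$ is weakly balanced in $C_n$.
   Context: $C_n$ has vertex set $\{0,\dots,n-1\}$ with $i$ adjacent to $i+1\bmod n$. $W(A)=\sum_{\{u,v\}\subseteq A,u\ne v}d(u,v)$ over unordered pairs, $d$ geodesic distance; $A$ is a maximizer of $W$ if $W(A)=\max\{W(B):|B|=|A|\}$. A set of vertices is connected if it induces a connected subgraph. A partition of $V(G)$ is equitable if any two blocks differ in size by at most one. $A$ is balanced in $G$ if for every equitable partition $\{P,Q\}$ of $V(G)$ into two connected blocks, $|A\cap P|$ and $|A\cap Q|$ differ by at most one. $A$ is weakly balanced in $G$ if for every equitable partition $\{P,Q\}$ of $V(G)$ into two connected blocks, $|A\cap P|$ and $|A\cap Q|$ differ by at most two, and whenever $|A\cap Q|=|A\cap P|+2$ we have $|P|<|Q|$. *)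

(* Defs.v *)
From mathcomp Require Import all_boot all_order.
Set Implicit Arguments. Unset Strict Implicit. Unset Printing Implicit Defensive.

Definition cyc_adj (n : nat) : rel 'I_n :=
  fun i j => (val j == (val i).+1 %% n) || (val i == (val j).+1 %% n).

Definition cdist (n : nat) (u v : 'I_n) : nat :=
  let k := maxn (val u) (val v) - minn (val u) (val v) in minn k (n - k).

Definition W (n : nat) (A : {set 'I_n}) : nat :=
  \sum_(u in A) \sum_(v in A | val u < val v) cdist u v.

Definition maximizer (n : nat) (A : {set 'I_n}) : Prop :=
  forall B : {set 'I_n}, #|B| = #|A| -> W B <= W A.

Definition induced_adj (n : nat) (P : {set 'I_n}) : rel 'I_n :=
  fun x y => [&& x \in P, y \in P & cyc_adj x y].

Definition connected_set (n : nat) (P : {set 'I_n}) : Prop :=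
  forall x y, x \in P -> y \in P -> connect (induced_adj P) x y.

Definition eq_conn_bipartition (n : nat) (P Q : {set 'I_n}) : Prop :=
  [/\ P :|: Q = setT, P :&: Q = set0, P != set0 /\ Q != set0,
      #|P| <= #|Q|.+1 /\ #|Q| <= #|P|.+1 &
      connected_set P /\ connected_set Q].

Definition balanced (n : nat) (A : {set 'I_n}) : Prop :=
  forall P Q : {set 'I_n}, eq_conn_bipartition P Q ->
    #|A :&: P| <= #|A :&: Q|.+1 /\ #|A :&: Q| <= #|A :&: P|.+1.

(* Quantifying over ordered pairs (P,Q) covers both labelings of {P,Q}. *)
Definition weakly_balanced (n : nat) (A : {set 'I_n}) : Prop :=
  forall P Q : {set 'I_n}, eq_conn_bipartition P Q ->
    [/\ #|A :&: P| <= #|A :&: Q|.+2, #|A :&: Q| <= #|A :&: P|.+2 &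
        (#|A :&: Q| = #|A :&: P|.+2 -> #|P| < #|Q|)].

(* Main.v *)
Require Import Defs.
From mathcomp Require Import all_boot all_order.
From mathcomp Require Import all_algebra zify.
Set Implicit Arguments. Unset Strict Implicit. Unset Printing Implicit Defensive.
Import GRing.Theory.

Section Cyc.
Variable p : nat.
Hypothesis Hp : 2 <= p.
Local Notation N := p.+1.
Local Notation T := 'I_N.

Lemma valD (x y : T) : val (x + y)%R = (val x + val y) %% N.
Proof. by []. Qed.

Lemma valB (x y : T) : val (x - y)%R = if y <= x then x - y else x + N - y.
Proof.
rewrite /= /=.
have hx := ltn_ord x; have hy := ltn_ord y.
case: (posnP y) => [y0|ypos].
  rewrite y0 subn0 modnn addn0 modn_small // leq0n subn0; by [] || lia.
rewrite (modn_small (m := N - y)); last by lia.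
case: leqP => h.
  have -> : x + (N - y) = (x - y) + N by lia.
  by rewrite modnDr modn_small //; lia.
rewrite modn_small; lia.
Qed.

Lemma valZ (t : nat) : t < N -> val (inZp t : T) = t.
Proof. by move=> h; rewrite /= modn_small. Qed.

Lemma cnt_int (M L : nat) : \sum_(i < M) (i < L : nat) = minn L M.
Proof.
elim: M => [|M IH]; first by rewrite big_ord0; lia.
rewrite big_ord_recr /= IH; case: ltnP => h; lia.
Qed.

Lemma modD_small (i d : nat) : i < N -> d < N ->
  (i + d) %% N = if i + d < N then i + d else i + d - N.
Proof.
move=> hi hd; case: ltnP => h; first by rewrite modn_small.
have -> : i + d = (i + d - N) + N by lia.
rewrite modnDr modn_small; lia.
Qed.

Lemma cnt_c (d kk : nat) : d < N -> kk <= N ->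
  \sum_(i < N) ((i < kk) && (kk <= (i + d) %% N) : nat) = minn kk (N - d) - (kk - d).
Proof.
move=> hd hk.
suff H : forall M, M <= N -> \sum_(i < M) ((i < kk) && (kk <= (i + d) %% N) : nat)
   = minn (minn kk M) (N - d) - (kk - d).
  by rewrite H //; lia.
elim=> [|M IH] hM; first by rewrite big_ord0; lia.
rewrite big_ord_recr /= IH; last lia.
rewrite modD_small; last by [] ; last lia.
case: ltnP => h1; case: ltnP => h2; rewrite /=; try case: leqP => h3; lia.
Qed.

Definition arc (s : T) (L : nat) : {set T} := [set v : T | val (v - s)%R < L].

Lemma reindex_sub (u : T) (F : T -> nat) :
  \sum_(s : T) F (u - s)%R = \sum_(t : T) F t.
Proof. by rewrite [RHS](reindex_inj (@subrI _ u)). Qed.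

Lemma reindex_add (s : T) (F : T -> nat) :
  \sum_(v : T) F v = \sum_(t : T) F (t + s)%R.
Proof. exact: (reindex_inj (@addIr _ s)). Qed.

Lemma card_sum (B : {set T}) : #|B| = \sum_(v : T) (v \in B : nat).
Proof. by rewrite -sum1_card big_mkcond. Qed.

Lemma cardI_sum (A B : {set T}) : #|A :&: B| = \sum_(u in A) (u \in B : nat).
Proof.
rewrite -sum1_card big_mkcond [RHS]big_mkcond; apply: eq_bigr => u _.
by rewrite in_setI; case: (u \in A); case: (u \in B).
Qed.

Lemma card_arc s L : #|arc s L| = minn L N.
Proof.
rewrite card_sum (reindex_add s).
under eq_bigr do rewrite in_set addrK.
exact: cnt_int.
Qed.

Lemma in_arc v s L : (v \in arc s L) = (val (v - s)%R < L).
Proof. by rewrite in_set. Qed.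

Definition cc (kk : nat) (u v : T) : nat :=
  \sum_(s : T) ((u \in arc s kk) && (v \notin arc s kk) : nat).

Lemma cc_val kk u v : kk <= N ->
  cc kk u v = minn kk (N - val (v - u)%R) - (kk - val (v - u)%R).
Proof.
move=> hk; rewrite /cc -(reindex_sub u).
under eq_bigr => t _.
  rewrite !in_arc subKr.
  have -> : (v - (u - t))%R = (t + (v - u))%R.
    by rewrite opprB addrCA.
  rewrite valD -leqNgt.
over.
by rewrite -cnt_c // ltn_ord.
Qed.

Definition k := N./2.

Lemma k_bounds : k + k <= N <= k + k + 1.
Proof. rewrite /k; have := odd_double_half N; case: (odd N) => /=; lia. Qed.

Lemma k_leN : k <= N.
Proof. have := k_bounds; lia. Qed.

Lemma cc_sym u v : cc k u v + cc k v u = 2 * cdist u v.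
Proof.
rewrite !cc_val ?k_leN // !valB /cdist.
have := k_bounds; have := ltn_ord u; have := ltn_ord v.
have eu : \val u = nat_of_ord u by [].
have ev : \val v = nat_of_ord v by [].
rewrite eu ev.
case: (leqP u v) => h1.
  case: (leqP v u) => h2; lia.
rewrite (ltnW h1); lia.
Qed.

Lemma cc_diag u : cc k u u = 0.
Proof. rewrite cc_val ?k_leN // subrr /=; lia. Qed.

Definition xs (A : {set T}) (s : T) := #|A :&: arc s k|.
Definition ys (A : {set T}) (s : T) := #|A :\: arc s k|.

Lemma xs_ys A s : xs A s + ys A s = #|A|.
Proof. exact: cardsID. Qed.

Lemma cardD_sum (A B : {set T}) : #|A :\: B| = \sum_(u in A) (u \notin B : nat).
Proof.
rewrite setDE cardI_sum; apply: eq_bigr => u _; by rewrite in_setC.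
Qed.

Lemma split_pairs (A : {set T}) (F : T -> T -> nat) :
  (forall u, F u u = 0) ->
  \sum_(u in A) \sum_(v in A) F u v =
  \sum_(u in A) \sum_(v in A | val u < val v) (F u v + F v u).
Proof.
move=> F0.
have E : forall u, \sum_(v in A) F u v =
   \sum_(v in A | val u < val v) F u v + \sum_(v in A | val v < val u) F u v.
  move=> u; rewrite (bigID (fun v => val u < val v)) /=; congr (_ + _).
  rewrite (bigID (fun v => val v < val u)) /=.
  rewrite [X in _ + X]big1 ?addn0; last first.
    move=> v /andP [/andP [_ h1] h2].
    have -> : v = u by apply: val_inj; rewrite -leqNgt in h1; rewrite -leqNgt in h2; apply/eqP; rewrite eqn_leq h1 h2.
    exact: F0.
  apply: eq_bigl => v; rewrite andbC; case: (v \in A); rewrite /= ?andbF //.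
  by case: ltngtP.
under eq_bigr do rewrite E.
rewrite big_split /=.
rewrite [X in _ + X](eq_bigr (fun u => \sum_(v in A) (val v < val u) * F u v)); last first.
  by move=> u _; rewrite big_mkcondr /=; apply: eq_bigr => v _; case: ltnP; rewrite ?mul1n ?mul0n.
rewrite exchange_big /=.
under [RHS]eq_bigr do rewrite big_split /=. rewrite big_split /=; congr (_ + _).
apply: eq_bigr => u _; rewrite big_mkcondr /=; apply: eq_bigr => v _.
by case: ltnP; rewrite ?mul1n ?mul0n.
Qed.

Lemma sum_xy (A : {set T}) : \sum_(s : T) xs A s * ys A s = 2 * W A.
Proof.
rewrite /xs /ys.
under eq_bigr do rewrite cardI_sum cardD_sum big_distrlr /=.
rewrite exchange_big /=.
under eq_bigr do rewrite exchange_big /=.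
rewrite (eq_bigr (fun u => \sum_(v in A) cc k u v)); last first.
  move=> u _; apply: eq_bigr => v _; rewrite /cc; apply: eq_bigr => s _.
  by rewrite mulnb.
rewrite split_pairs; last exact: cc_diag.
rewrite /W big_distrr /=; apply: eq_bigr => u _.
rewrite big_distrr /=; apply: eq_bigr => v _.
exact: cc_sym.
Qed.

Lemma sum_x (A : {set T}) : \sum_(s : T) xs A s = #|A| * k.
Proof.
rewrite /xs; under eq_bigr do rewrite cardI_sum.
rewrite exchange_big /= -sum_nat_const; apply: eq_bigr => u _.
rewrite -(reindex_sub u); under eq_bigr do rewrite in_arc subKr.
rewrite cnt_int; have := k_leN; lia.
Qed.

Lemma sum_eq_pt (a b : T -> nat) : (forall i, a i <= b i) ->
  \sum_(i : T) a i = \sum_(i : T) b i -> forall i, a i = b i.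
Proof.
move=> hab hs j; apply/eqP; rewrite eqn_leq hab /=; apply/negP => /negP; rewrite -ltnNge => hj.
suff: \sum_(i : T) a i < \sum_(i : T) b i by rewrite hs ltnn.
rewrite (bigD1 j) // [X in _ < X](bigD1 j) //= -addSn; apply: leq_add => //.
by apply: leq_sum => i _; exact: hab.
Qed.

Definition ub m x := if odd m then m * m - 1 else if odd N then m * m - 2 * m + 4 * x else m * m.
Definition allowed m x := if odd m then (x.*2 == m.-1) || (x.*2 == m.+1)
  else if odd N then (x.*2 == m) || (x.*2 + 2 == m) else x.*2 == m.

Lemma term m x : 2 <= m -> x <= m ->
  4 * (x * (m - x)) <= ub m x /\ (4 * (x * (m - x)) = ub m x <-> allowed m x).
Proof.
move=> hm hx; rewrite /ub /allowed.
have hmo := odd_double_half m.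
case: (odd m) hmo => hmo; case: (odd N).
all: have [y ey] : exists y, m = x + y by exists (m - x); lia.
all: subst m; rewrite addKn.
all: have [[g eg]|[g eg]] : (exists g, y = x + g) \/ (exists g, x = y + g.+1) by
  case: (leqP x y) => h; [left; exists (y - x) | right; exists (x - y.+1)]; lia.
all: subst; have hg := odd_double_half g; case: (odd g) hg => /= hg.
all: set h := g./2 in hg *; rewrite -hg in hmo *; try lia.
all: split; [try nia | split => H; try nia].
Qed.

Definition Ub m := if odd m then N * (m * m - 1)
  else if odd N then N * (m * m - 2 * m) + 4 * (m * k) else N * (m * m).

Definition cond (A : {set T}) := forall s, allowed #|A| (xs A s).

Lemma xs_le (A : {set T}) s : xs A s <= #|A|.
Proof. exact: subset_leq_card (subsetIl A _). Qed.

Lemma W8 (A : {set T}) : 8 * W A = \sum_(s : T) 4 * (xs A s * (#|A| - xs A s)).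
Proof.
have -> : 8 * W A = 4 * (2 * W A) by rewrite mulnA.
rewrite -sum_xy big_distrr /=; apply: eq_bigr => s _.
by rewrite -(xs_ys A s) addKn.
Qed.

Lemma sum_ub (A : {set T}) : \sum_(s : T) ub #|A| (xs A s) = Ub #|A|.
Proof.
rewrite /ub /Ub; case: (odd #|A|).
  by rewrite sum_nat_const card_ord mulnC.
case: (odd N); last by rewrite sum_nat_const card_ord mulnC.
by rewrite big_split /= sum_nat_const card_ord -big_distrr /= sum_x mulnC.
Qed.

Lemma W_bound (A : {set T}) : 2 <= #|A| -> 8 * W A <= Ub #|A| /\ (8 * W A = Ub #|A| <-> cond A).
Proof.
move=> hm; rewrite W8 -sum_ub; split.
  by apply: leq_sum => s _; case: (term hm (xs_le A s)).
split.
  move=> H s; have := sum_eq_pt (fun s => proj1 (term hm (xs_le A s))) H s.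
  by case: (term hm (xs_le A s)) => _ ->.
move=> H; apply: eq_bigr => s _; case: (term hm (xs_le A s)) => _ ->; exact: H.
Qed.

Section Sturm.
Variable m : nat.
Hypothesis hm : 2 <= m <= N.

Definition Fm j := j * m %/ N.
Local Notation F := Fm.

Lemma F_perq j q : F (j + q * N) = F j + q * m.
Proof. by rewrite /Fm mulnDl -mulnA (mulnC N m) mulnA divnDMl. Qed.

Lemma F_mono i j : i <= j -> F i <= F j.
Proof. by move=> h; apply: leq_div2r; rewrite leq_mul2r h orbT. Qed.

Lemma F_step j : F j.+1 <= F j + 1.
Proof.
rewrite /Fm mulSn addnC divnD //.
have h1 := ltn_pmod (j * m) (ltn0Sn p).
case: (ltnP m N) => h.
  rewrite (divn_small h) (modn_small h); lia.
have e : m = N by lia.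
rewrite e modnn divnn /=; lia.
Qed.

Definition bm j := F j.+1 - F j.
Local Notation b := bm.

Lemma b_mod j : b (j %% N) = b j.
Proof.
have ej : j = j %% N + j %/ N * N by rewrite addnC -divn_eq.
have e1 : F j = F (j %% N) + j %/ N * m by rewrite {1}ej F_perq.
have e2 : F j.+1 = F (j %% N).+1 + j %/ N * m by rewrite {1}ej -addSn F_perq.
rewrite /bm e1 e2; lia.
Qed.

Definition sturm : {set T} := [set v : T | F v < F v.+1].

Lemma in_sturm (v : T) : ((v \in sturm) : nat) = b v.
Proof. rewrite in_set /bm; have := F_step v; have := F_mono (leqnSn v); case: ltnP; lia. Qed.

Lemma tele s L : \sum_(i < L) b (i + s) = F (L + s) - F s.
Proof.
elim: L => [|L IH]; first by rewrite big_ord0 subnn.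
rewrite big_ord_recr /= IH /bm addSn.
have := F_mono (leq_addl L s); have := F_mono (leqnSn (L + s)); lia.
Qed.

Lemma card_sturm : #|sturm| = m.
Proof.
rewrite card_sum; under eq_bigr do rewrite in_sturm.
rewrite (eq_bigr (fun i : T => b (i + 0))); last by move=> i _; rewrite addn0.
rewrite tele addn0 /Fm mul0n div0n subn0 mulKn //.
Qed.

Lemma xs_sturm s : xs sturm s = F (s + k) - F s.
Proof.
rewrite /xs card_sum (reindex_add s).
under eq_bigr do rewrite in_setI in_arc addrK.
rewrite big_mkcond /=.
rewrite (eq_bigr (fun t : T => if val t < k then b (val t + s) else 0)); last first.
  move=> t _; rewrite -b_mod -valD -in_sturm; case: (val t < k); rewrite ?andbT ?andbF //.
rewrite -big_mkcond /= -(big_ord_widen _ (fun i => b (i + s)) k_leN) tele addnC //.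
Qed.

Lemma divmod_eq a q r : a = q * N + r -> r < N -> a %/ N = q /\ a %% N = r.
Proof.
move=> -> hr; split; first by rewrite divnMDl // divn_small // addn0.
by rewrite modnMDl modn_small.
Qed.

Lemma sturm_gen s q r : k * m = q * N + r -> r < N ->
  exists c, [/\ c <= 1, xs sturm s = q + c & (r = 0 -> c = 0)].
Proof.
move=> E hr; have [eq er] := divmod_eq E hr.
rewrite xs_sturm /Fm mulnDl divnD // eq er.
have hsm := ltn_pmod (s * m) (ltn0Sn p).
exists (N <= (s * m) %% N + r); case: leqP => h; split; lia.
Qed.

Lemma sturm_cond : cond sturm.
Proof.
move=> s; rewrite /allowed card_sturm.
have hmo := odd_double_half m; have hNo := odd_double_half N.
change (N./2) with k in hNo.
set j := m./2 in hmo.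
case: (odd m) hmo => hmo; case: (odd N) hNo => /= hNo.
- have [c [hc -> h0]] := @sturm_gen s j (k - j) ltac:(nia) ltac:(lia); lia.
- have [c [hc -> h0]] := @sturm_gen s j k ltac:(nia) ltac:(lia); lia.
- have [i ei] : exists i, j = i.+1 by exists j.-1; lia.
  rewrite ei in hmo.
  have [c [hc -> h0]] := @sturm_gen s i (N - i.+1) ltac:(nia) ltac:(lia); lia.
- have [c [hc -> h0]] := @sturm_gen s j 0 ltac:(nia) ltac:(lia); lia.
Qed.

End Sturm.

Local Notation o := (inZp 1 : T).

Lemma val_o : val o = 1.
Proof. by rewrite /= modn_small //; lia. Qed.

Lemma subDA (v a b : T) : (v - (a + b) = (v - a) - b)%R.
Proof. by rewrite opprD addrA. Qed.

Lemma addKsub (a b : T) : ((a + b) - a = b)%R.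
Proof. by rewrite addrC addKr. Qed.

Lemma adj_succ (x : T) : cyc_adj x (x + o)%R.
Proof. by rewrite /cyc_adj valD val_o addn1 eqxx. Qed.

Lemma adj_cases (x y : T) : cyc_adj x y -> y = (x + o)%R \/ x = (y + o)%R.
Proof.
case/orP => /eqP h; [left | right]; apply: val_inj; by rewrite valD val_o h addn1.
Qed.

Lemma induced_sym (P : {set T}) : symmetric (induced_adj P).
Proof.
move=> x y; rewrite /induced_adj /cyc_adj.
by case: (x \in P); case: (y \in P) => //=; rewrite orbC.
Qed.

Lemma arc_connected s L : connected_set (arc s L).
Proof.
have csym := sym_connect_sym (induced_sym (arc s L)).
suff H : forall v, v \in arc s L -> connect (induced_adj (arc s L)) s v.
  move=> x y hx hy; apply: connect_trans (H y hy); rewrite csym; exact: H.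
move=> v hv.
suff H : forall t, t < L -> t < N -> connect (induced_adj (arc s L)) s (s + inZp t)%R.
  have := H (val (v - s)%R); rewrite -in_arc valZpK addrCA subrr addr0; apply => //; exact: ltn_ord.
elim=> [|t IH] hL hN.
  have -> : (inZp 0 : T) = 0%R by apply: val_inj.
  by rewrite addr0.
apply: connect_trans (IH (ltnW hL) (ltnW hN)) _; apply: connect1.
have -> : (s + inZp t.+1 = (s + inZp t) + o)%R.
  apply: val_inj; rewrite !valD val_o /=. by rewrite (modn_small hN) (modn_small (ltnW hN)) modnDml addn1 addnS.
rewrite /induced_adj adj_succ !in_arc addKsub -(addrA s) addKsub valD val_o /= (modn_small (ltnW hN)) addn1 (modn_small hN) andbT; lia.
Qed.

Section ConnArc.
Variable P : {set T}.
Variable q : T.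
Hypothesis hq : q \notin P.
Hypothesis hc : connected_set P.

Local Notation q' := (q + o)%R.
Definition pos (v : T) := val (v - q')%R.

Lemma pos_inj v w : pos v = pos w -> v = w.
Proof. by move/val_inj/addIr. Qed.

Lemma pos_q : pos q = p.
Proof.
rewrite /pos subDA subrr add0r.
have -> : val (- o)%R = (N - val o) %% N by [].
rewrite val_o modn_small; lia.
Qed.

Lemma pos_lt v : v \in P -> pos v < p.
Proof.
move=> hv; have := ltn_ord (v - q')%R; rewrite -/(pos v) => hlt.
case: (ltnP (pos v) p) => // hge.
have e : pos v = pos q by rewrite pos_q; lia.
have evq := pos_inj e; move: hq; by rewrite -evq hv.
Qed.

Lemma pos_step x z : x \in P -> z \in P -> cyc_adj x z ->
  pos z = (pos x).+1 \/ pos x = (pos z).+1.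
Proof.
move=> hx hz /adj_cases [->|->]; [left | right].
  rewrite /pos addrAC (valD (x - q')%R o) val_o modn_small ?addn1 //.
  by have := pos_lt hx; rewrite /pos; lia.
rewrite /pos addrAC (valD (z - q')%R o) val_o modn_small ?addn1 //.
by have := pos_lt hz; rewrite /pos; lia.
Qed.

Lemma ivt x s c : x \in P -> path (induced_adj P) x s ->
  (pos x <= c <= pos (last x s)) || (pos (last x s) <= c <= pos x) ->
  exists2 z, z \in P & pos z = c.
Proof.
elim: s x => [|z s IH] x hx /=.
  by move=> _ h; exists x => //; lia.
case/andP => /and3P [_ hz hxz] hp hcase.
case: (eqVneq (pos x) c) => hxc; first by exists x.
apply: (IH z hz hp).
have := pos_step hx hz hxz; move/eqP: hxc; move: hcase; move: (pos x) (pos z) (pos (last z s)) => a b l; lia.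
Qed.

Lemma posB v t : t < N ->
  val (v - q' - inZp t)%R = if t <= pos v then pos v - t else pos v + N - t.
Proof.
move=> ht; rewrite valB.
have e1 : nat_of_ord (inZp t : T) = t by rewrite /= modn_small.
have e2 : nat_of_ord (v - q')%R = pos v by [].
by rewrite e1 e2.
Qed.

Lemma conn_arc v0 : v0 \in P -> exists s, P = arc s #|P|.
Proof.
move=> hv0.
case: (arg_minnP pos hv0) => vl hvl Hl.
case: (arg_maxnP pos hv0) => vh hvh Hh.
have hhi := pos_lt hvh.
have hlohi := Hl vh hvh.
move: Hl Hh hhi hlohi; set lo := pos vl; set hi := pos vh => Hl Hh hhi hlohi.
have EP : P = arc (q' + inZp lo)%R (hi - lo).+1.
  apply/setP => v; rewrite in_arc subDA posB; last by lia.
  case: (boolP (v \in P)) => hv.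
    have h1 : pos v <= hi := Hh v hv; have h2 : lo <= pos v := Hl v hv; rewrite h2; apply/esym; lia.
  apply/esym/negbTE; case: (leqP lo (pos v)) => h1; last by lia.
  apply/negP => h2.
  have [s hs el] := connectP (hc hvl hvh).
  have [z hz ez] := @ivt vl s (pos v) hvl hs ltac:(rewrite -el; lia).
  by move: hv; rewrite -(pos_inj ez) hz.
exists (q' + inZp lo)%R; rewrite [in RHS]EP card_arc.
have -> : minn (hi - lo).+1 N = (hi - lo).+1 by lia.
exact: EP.
Qed.

End ConnArc.

Lemma compl_arc s : ~: arc s k = arc (s + inZp k)%R (N - k).
Proof.
apply/setP => v; rewrite in_setC !in_arc subDA (valB (v - s)%R).
have e1 : nat_of_ord (inZp k : T) = k by rewrite /= modn_small //; have := k_bounds; lia.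
have e2 : nat_of_ord (v - s)%R = val (v - s)%R by [].
have := ltn_ord (v - s)%R; rewrite e1 e2 => h.
case: (leqP k (val (v - s)%R)) => h1; apply/idP/idP; lia.
Qed.

Lemma bip_sym (P Q : {set T}) : eq_conn_bipartition P Q -> eq_conn_bipartition Q P.
Proof.
case=> hU hI [h1 h2] [h3 h4] [h5 h6]; split => //; by rewrite 1?setUC 1?setIC.
Qed.

Lemma k_pos : 0 < k.
Proof. have := k_bounds; lia. Qed.

Lemma arc_bip s : eq_conn_bipartition (arc s k) (~: arc s k).
Proof.
have hb := k_bounds.
have ca : #|arc s k| = k by rewrite card_arc; lia.
have cc : #|~: arc s k| = N - k by have := cardsC (arc s k); rewrite card_ord ca; lia.
split.
- exact: setUCr.
- exact: setICr.
- by split; rewrite -card_gt0 ?ca ?cc; lia.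
- rewrite ca cc; lia.
- by split; [exact: arc_connected | rewrite compl_arc; exact: arc_connected].
Qed.

Lemma bip_arc (P Q : {set T}) : eq_conn_bipartition P Q ->
  exists s, (P = arc s k /\ Q = ~: arc s k) \/ (Q = arc s k /\ P = ~: arc s k).
Proof.
case=> hU hI [hP0 hQ0] [h1 h2] [cP cQ].
have eQ : Q = ~: P.
  apply/setP => v; rewrite in_setC.
  have hUv : v \in P :|: Q by rewrite hU inE.
  have hIv : v \notin P :&: Q by rewrite hI inE.
  move: hUv hIv; rewrite !inE; by case: (v \in P); case: (v \in Q).
have hcard : #|P| + #|Q| = N by rewrite eQ cardsC card_ord.
have := k_bounds => hb.
case/set0Pn: hP0 => v0 hv0; case/set0Pn: hQ0 => q0 hq0.
case: (leqP #|P| #|Q|) => hPQ.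
  have hq : q0 \notin P by move: hq0; rewrite eQ in_setC.
  have [s es] := conn_arc hq cP hv0.
  have ck : #|P| = k by lia.
  by exists s; left; rewrite -ck -es eQ.
have hq : v0 \notin Q by rewrite eQ in_setC negbK.
have [s es] := conn_arc hq cQ hq0.
have ck : #|Q| = k by lia.
exists s; right; rewrite -ck -es; split => //.
by rewrite eQ setCK.
Qed.

Lemma allowed_arith m x : x <= m ->
  (allowed m x <-> (m - x <= x + 1 /\ x <= m - x + 1) \/ (odd N /\ m - x = x + 2)).
Proof.
move=> hx; rewrite /allowed; have hmo := odd_double_half m.
case: (odd m) hmo => hmo; case: (odd N) => /=; split; lia.
Qed.

Lemma oddN_k : (odd N -> N = k + k + 1) /\ (~~ odd N -> N = k + k).
Proof. rewrite /k; have := odd_double_half N; case: (odd N) => /=; split; lia. Qed.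

Lemma cardCx (A : {set T}) s : #|A :&: ~: arc s k| = #|A| - xs A s.
Proof. by rewrite -setDE -(xs_ys A s) addKn. Qed.

Lemma card_arc_k s : #|arc s k| = k.
Proof. rewrite card_arc; have := k_bounds; lia. Qed.

Lemma card_carc_k s : #|~: arc s k| = N - k.
Proof. have := cardsC (arc s k); rewrite card_ord card_arc_k; lia. Qed.

Lemma cond_wb (A : {set T}) : cond A <-> weakly_balanced A.
Proof.
have [ho he] := oddN_k; have hb := k_bounds.
split.
  move=> hc P Q /bip_arc [s [[-> ->]|[-> ->]]];
    have := proj1 (allowed_arith (xs_le A s)) (hc s);
    rewrite cardCx /xs card_arc_k card_carc_k;
    case: (odd N) ho he => /= ho he; try (have := ho erefl); try (have := he erefl);
    move=> *; split; lia.
move=> hw s; apply/(allowed_arith (xs_le A s)).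
have [h1 h2 h3] := hw _ _ (arc_bip s).
have [h4 h5 h6] := hw _ _ (bip_sym (arc_bip s)).
move: h1 h2 h3 h4 h5 h6; rewrite cardCx card_arc_k card_carc_k -/(xs A s).
have := xs_le A s.
case: (odd N) ho he => /= ho he; try (have := ho erefl); try (have := he erefl); lia.
Qed.

Lemma cond_bal (A : {set T}) : ~~ odd N \/ odd #|A| -> (cond A <-> balanced A).
Proof.
move=> hpar; have hmo := odd_double_half #|A|.
split.
  move=> hc P Q /bip_arc [s [[-> ->]|[-> ->]]];
    have := proj1 (allowed_arith (xs_le A s)) (hc s);
    rewrite cardCx /xs; move: hpar hmo;
    case: (odd N); case: (odd #|A|) => /=; lia.
move=> hw s; apply/(allowed_arith (xs_le A s)).
have [h1 h2] := hw _ _ (arc_bip s).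
move: h1 h2; rewrite cardCx -/(xs A s); lia.
Qed.

Lemma no_bal (B : {set T}) : odd N -> ~~ odd #|B| -> 2 <= #|B| -> ~ balanced B.
Proof.
move=> hN hB h2 hbal.
have hmo := odd_double_half #|B|; rewrite (negbTE hB) /= in hmo.
have [ho _] := oddN_k; have := ho hN => eN.
have E : forall s, (xs B s).*2 = #|B|.
  move=> s; have [h1 h3] := hbal _ _ (arc_bip s).
  move: h1 h3; rewrite cardCx -/(xs B s); have := xs_le B s; move: hmo; move: (#|B|) (xs B s) (#|B|./2) => M X J; lia.
have := sum_x B.
have S2 : \sum_(s : T) (xs B s).*2 = N * #|B|.
  by rewrite (eq_bigr (fun _ => #|B|)) ?sum_nat_const ?card_ord // => s _; exact: E.
have S3 : \sum_(s : T) (xs B s).*2 = 2 * \sum_(s : T) xs B s.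
  by rewrite big_distrr; apply: eq_bigr => s _; rewrite -mul2n.
move=> S1; rewrite S3 S1 in S2; move: S2 eN h2; move: (#|B|) => M; nia.
Qed.

Lemma max_cond (A : {set T}) : 2 <= #|A| <= N -> (maximizer A <-> cond A).
Proof.
move=> hm; have hm2 : 2 <= #|A| by case/andP: hm.
have hcs := sturm_cond hm; have hcard := card_sturm hm.
set B := sturm #|A| in hcs hcard.
have hB2 : 2 <= #|B| by rewrite hcard.
have [_ [_ EB]] := W_bound hB2; have WB := EB hcs; rewrite hcard in WB.
have [LA [IA1 IA2]] := W_bound hm2.
split.
  move=> hmax; apply: IA1; have := hmax B hcard; lia.
move=> hc C hC; have hC2 : 2 <= #|C| by rewrite hC.
have [LC _] := W_bound hC2; rewrite hC in LC; have := IA2 hc; lia.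
Qed.

Lemma main_N (A : {set T}) : 2 <= #|A| <= N ->
  [/\ (~~ odd N \/ odd #|A| -> (maximizer A <-> balanced A)),
      (odd N /\ ~~ odd #|A| ->
         (maximizer A <-> weakly_balanced A) /\
         (forall B : {set T}, #|B| = #|A| -> maximizer B -> ~ balanced B)) &
      (maximizer A <-> weakly_balanced A)].
Proof.
move=> hm; have hm2 : 2 <= #|A| by case/andP: hm.
have E1 := max_cond hm; have E2 := cond_wb A.
split.
- move=> hpar; have E3 := cond_bal hpar; tauto.
- move=> [hN hA]; split; first tauto.
  by move=> B hB _; apply: no_bal => //; rewrite hB.
- tauto.
Qed.

End Cyc.

Theorem mainTheorem16 (n : nat) (A : {set 'I_n}) :
  3 <= n -> 2 <= #|A| <= n ->
  [/\ (~~ odd n \/ odd #|A| -> (maximizer A <-> balanced A)),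
      (odd n /\ ~~ odd #|A| ->
         (maximizer A <-> weakly_balanced A) /\
         (forall B : {set 'I_n}, #|B| = #|A| -> maximizer B -> ~ balanced B)) &
      (maximizer A <-> weakly_balanced A)].
Proof.
case: n A => [|p] A hn hm; first by [].
exact: (@main_N p hn A hm).
Qed.
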